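(* Let $[x]t$ be a normal linear lambda term with exactly one free variable $x$. Then exactly one of the following holds: (1) $[x]t$ is the identity term, i.e. $t = x$; (2) $[x]t$ is function-open, i.e. $x(u)$ is a subterm of $t$ for some $u$; (3) $[x]t$ is value-open, i.e. $u(x)$ is a subterm of $t$ for some $u$.
   Context: Lambda skeletons: graded sets $\mathrm{SLam}(i)$, least such that $\_ \in \mathrm{SLam}(1)$; $p\in\mathrm{SLam}(j), q\in\mathrm{SLam}(k)\Rightarrow p(q)\in\mathrm{SLam}(j+k)$; $p\in\mathrm{SLam}(i+1)\Rightarrow \lambda\_.p\in\mathrm{SLam}(i)$. A linear lambda term with free variables $\Gamma$ decorating $p$, written $[\Gamma]t\in\Lambda_1(p)$, is defined by the rules: $[x]x\in\Lambda_1(\_)$; from $[\Gamma]t\in\Lambda_1(p)$, $[\Delta]u\in\Lambda_1(q)$ infer $[\Gamma,\Delta]t(u)\in\Lambda_1(p(q))$; from $[x,\Gamma]t\in\Lambda_1(p)$ infer $[\Gamma]\lambda x.t\in\Lambda_1(\lambda\_.p)$; from $[\Gamma,y,x,\Delta]t\in\Lambda_1(p)$ infer $[\Gamma,x,y,\Delta]t\in\Lambda_1(p)$ (so every variable is used exactly once). A linear term is normal if its skeleton $p$ of degree $i$ lies in $\mathrm{SNF}(i)$, where $\mathrm{SNeu}(i)$, $\mathrm{SNF}(i)$ are defined by the rules (v) $\_\in\mathrm{SNeu}(1)$; (a) $p\in\mathrm{SNeu}(j)$, $q\in\mathrm{SNF}(k)\Rightarrow p(q)\in\mathrm{SNeu}(j+k)$;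 (s) $p\in\mathrm{SNeu}(i)\Rightarrow p\in\mathrm{SNF}(i)$; ($\ell$) $p\in\mathrm{SNF}(i+1)\Rightarrow\lambda\_.p\in\mathrm{SNF}(i)$ (equivalently, the term contains no subterm $(\lambda y.v)(w)$). *)

(* Defs.v *)
From Stdlib Require Import List.
Import ListNotations.

Definition var := nat.

Inductive term : Type :=
| Var : var -> term
| App : term -> term -> term
| Lam : var -> term -> term.

Inductive skel : Type :=
| SHole : skel
| SApp : skel -> skel -> skel
| SLam : skel -> skel.

Inductive SLamDeg : nat -> skel -> Prop :=
| sl_hole : SLamDeg 1 SHole
| sl_app : forall j k p q, SLamDeg j p -> SLamDeg k q -> SLamDeg (j + k) (SApp p q)
| sl_lam : forall i p, SLamDeg (S i) p -> SLamDeg i (SLam p).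

Inductive SNeu : nat -> skel -> Prop :=
| sneu_v : SNeu 1 SHole
| sneu_a : forall j k p q, SNeu j p -> SNF k q -> SNeu (j + k) (SApp p q)
with SNF : nat -> skel -> Prop :=
| snf_s : forall i p, SNeu i p -> SNF i p
| snf_l : forall i p, SNF (S i) p -> SNF i (SLam p).

(* The application rule requires the contexts
   Gamma and Delta to be disjoint (contexts are lists of distinct
   variables), which is implicit in the paper's notation [Gamma,Delta]. *)
Inductive lin : list var -> term -> skel -> Prop :=
| lin_var : forall x, lin [x] (Var x) SHole
| lin_app : forall G D t u p q,
    lin G t p -> lin D u q -> NoDup (G ++ D) ->
    lin (G ++ D) (App t u) (SApp p q)
| lin_lam : forall x G t p,
    lin (x :: G) t p -> lin G (Lam x t) (SLam p)
| lin_exch : forall G D x y t p,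
    lin (G ++ y :: x :: D) t p -> lin (G ++ x :: y :: D) t p.

Definition normal_lin (G : list var) (t : term) : Prop :=
  exists p, lin G t p /\ SLamDeg (length G) p /\ SNF (length G) p.

(* subterm_at s bs t : s occurs as a subterm of t, and bs lists the
   variables bound by the lambdas on the path from the root of t to s. *)
Inductive subterm_at : term -> list var -> term -> Prop :=
| st_refl : forall t, subterm_at t [] t
| st_appl : forall s bs t u, subterm_at s bs t -> subterm_at s bs (App t u)
| st_appr : forall s bs t u, subterm_at s bs u -> subterm_at s bs (App t u)
| st_lam : forall s bs y t, subterm_at s bs t -> subterm_at s (y :: bs) (Lam y t).

(* x(u) is a subterm of t, with x referring to the free variable x *)
Definition function_open (x : var) (t : term) : Prop :=
  exists u bs, subterm_at (App (Var x) u) bs t /\ ~ In x bs.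

(* u(x) is a subterm of t, with x referring to the free variable x *)
Definition value_open (x : var) (t : term) : Prop :=
  exists u bs, subterm_at (App u (Var x)) bs t /\ ~ In x bs.

Definition is_identity (x : var) (t : term) : Prop := t = Var x.

Definition exactly_one (A B C : Prop) : Prop :=
  (A /\ ~ B /\ ~ C) \/ (~ A /\ B /\ ~ C) \/ (~ A /\ ~ B /\ C).

(* Main.v *)
Require Import Defs.
From Stdlib Require Import List Lia Permutation.
Import ListNotations.

Fixpoint occ (x : var) (t : term) : nat :=
  match t with
  | Var y => if PeanoNat.Nat.eq_dec y x then 1 else 0
  | App a b => occ x a + occ x b
  | Lam y b => if PeanoNat.Nat.eq_dec y x then 0 else occ x b
  end.

Lemma lin_nodup G t p : lin G t p -> NoDup G.
Proof.
  induction 1.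
  - constructor; [simpl; tauto| constructor].
  - assumption.
  - inversion IHlin; assumption.
  - eapply Permutation_NoDup; [|exact IHlin].
    apply Permutation_app_head. apply perm_swap.
Qed.

Lemma lin_occ G t p : lin G t p -> forall x, occ x t = count_occ PeanoNat.Nat.eq_dec G x.
Proof.
  induction 1; intro z.
  - simpl. destruct (PeanoNat.Nat.eq_dec x z); reflexivity.
  - simpl. rewrite count_occ_app, IHlin1, IHlin2. reflexivity.
  - simpl. pose proof (lin_nodup _ _ _ H) as Hn. rewrite IHlin. simpl.
    destruct (PeanoNat.Nat.eq_dec x z).
    + subst. inversion Hn; subst. symmetry. apply count_occ_not_In. assumption.
    + reflexivity.
  - rewrite IHlin, !count_occ_app. simpl.
    destruct (PeanoNat.Nat.eq_dec y z); destruct (PeanoNat.Nat.eq_dec x z); lia.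
Qed.

Lemma sub_occ s bs t x : subterm_at s bs t -> ~ In x bs -> occ x s <= occ x t.
Proof.
  induction 1; intro Hn; simpl.
  - lia.
  - specialize (IHsubterm_at Hn); lia.
  - specialize (IHsubterm_at Hn); lia.
  - destruct (PeanoNat.Nat.eq_dec y x).
    + subst. exfalso. apply Hn. left. reflexivity.
    + apply IHsubterm_at. intro; apply Hn; right; assumption.
Qed.

Lemma trich G t p : lin G t p -> forall x, In x G ->
  t = Var x \/ function_open x t \/ value_open x t.
Proof.
  induction 1; intros z Hz.
  - destruct Hz as [<-|[]]. left; reflexivity.
  - apply in_app_or in Hz. destruct Hz as [Hz|Hz].
    + destruct (IHlin1 z Hz) as [->|[[w [bs [Hs Hb]]]|[w [bs [Hs Hb]]]]].
      * right; left. exists u, []. split; [constructor|simpl; tauto].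
      * right; left. exists w, bs. split; [apply st_appl; assumption|assumption].
      * right; right. exists w, bs. split; [apply st_appl; assumption|assumption].
    + destruct (IHlin2 z Hz) as [->|[[w [bs [Hs Hb]]]|[w [bs [Hs Hb]]]]].
      * right; right. exists t, []. split; [constructor|simpl; tauto].
      * right; left. exists w, bs. split; [apply st_appr; assumption|assumption].
      * right; right. exists w, bs. split; [apply st_appr; assumption|assumption].
  - pose proof (lin_nodup _ _ _ H) as Hn. inversion Hn; subst.
    assert (x <> z) by (intro; subst; contradiction).
    destruct (IHlin z (or_intror Hz)) as [->|[[w [bs [Hs Hb]]]|[w [bs [Hs Hb]]]]].
    + exfalso. pose proof (lin_occ _ _ _ H x) as E. simpl in E.
      destruct (PeanoNat.Nat.eq_dec z x); [congruence|].
      destruct (PeanoNat.Nat.eq_dec x x); [discriminate|congruence].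
    + right; left. exists w, (x :: bs). split; [apply st_lam; assumption|].
      simpl; intros [?|?]; [congruence|contradiction].
    + right; right. exists w, (x :: bs). split; [apply st_lam; assumption|].
      simpl; intros [?|?]; [congruence|contradiction].
  - apply IHlin. apply in_app_or in Hz. apply in_or_app.
    destruct Hz as [?|[?|[?|?]]]; [left|right;right;left|right;left|right;right;right]; assumption.
Qed.

Lemma fo_occ x t : function_open x t -> 1 <= occ x t.
Proof.
  intros [u [bs [Hs Hb]]]. pose proof (sub_occ _ _ _ x Hs Hb). simpl in H.
  destruct (PeanoNat.Nat.eq_dec x x); [lia|congruence].
Qed.

Lemma vo_occ x t : value_open x t -> 1 <= occ x t.
Proof.
  intros [u [bs [Hs Hb]]]. pose proof (sub_occ _ _ _ x Hs Hb). simpl in H.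
  destruct (PeanoNat.Nat.eq_dec x x); [lia|congruence].
Qed.

Lemma excl x t : occ x t = 1 -> function_open x t -> value_open x t -> False.
Proof.
  induction t; intros Ho [u [bs [Hs Hb]]] [w [cs [Ht Hc]]].
  - inversion Hs.
  - simpl in Ho.
    assert (Hx : (if PeanoNat.Nat.eq_dec x x then 1 else 0) = 1)
      by (destruct (PeanoNat.Nat.eq_dec x x); congruence).
    inversion Hs; subst; inversion Ht; subst;
    try (match goal with
      | H1 : subterm_at (App (Var x) ?u) ?b t1, H1' : ~ In x ?b,
        H2 : subterm_at (App ?w (Var x)) ?c t1, H2' : ~ In x ?c |- _ =>
        assert (1 <= occ x t1) by (apply fo_occ; exists u, b; auto);
        apply IHt1; [lia|exists u, b; auto|exists w, c; auto]
      | H1 : subterm_at (App (Var x) ?u) ?b t2, H1' : ~ In x ?b,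
        H2 : subterm_at (App ?w (Var x)) ?c t2, H2' : ~ In x ?c |- _ =>
        assert (1 <= occ x t2) by (apply fo_occ; exists u, b; auto);
        apply IHt2; [lia|exists u, b; auto|exists w, c; auto]
      end; fail);
    repeat match goal with
    | H : subterm_at (App _ _) _ (Var _) |- _ => inversion H
    | H : subterm_at (App (Var x) ?u) ?b ?s, H' : ~ In x ?b |- _ =>
        assert (1 <= occ x s) by (apply fo_occ; exists u, b; auto); clear H H'
    | H : subterm_at (App ?u (Var x)) ?b ?s, H' : ~ In x ?b |- _ =>
        assert (1 <= occ x s) by (apply vo_occ; exists u, b; auto); clear H H'
    end; simpl in *; try lia.
  - inversion Hs; subst; inversion Ht; subst.
    simpl in Ho. destruct (PeanoNat.Nat.eq_dec v x).
    + subst. apply Hb; left; reflexivity.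
    + match goal with
      | H1 : subterm_at (App (Var x) u) ?b t, H2 : subterm_at (App w (Var x)) ?c t |- _ =>
        apply IHt; [assumption| exists u, b | exists w, c]; split; auto;
        intro; [apply Hb|apply Hc]; right; assumption
      end.
Qed.

Theorem proposition4p5 (x : var) (t : term) :
  normal_lin [x] t ->
  exactly_one (is_identity x t) (function_open x t) (value_open x t).
Proof.
  intros [p [Hl _]].
  assert (Ho : occ x t = 1).
  { rewrite (lin_occ _ _ _ Hl x). simpl. destruct (PeanoNat.Nat.eq_dec x x); congruence. }
  unfold exactly_one, is_identity.
  destruct (trich _ _ _ Hl x (or_introl eq_refl)) as [E|[F|V]].
  - left. subst. split; [reflexivity|split].
    + intros [u [bs [Hs _]]]; inversion Hs.
    + intros [u [bs [Hs _]]]; inversion Hs.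
  - right; left. split; [|split; [assumption|]].
    + intro; subst; destruct F as [u [bs [Hs _]]]; inversion Hs.
    + intro V; exact (excl x t Ho F V).
  - right; right. split; [|split; [|assumption]].
    + intro; subst; destruct V as [u [bs [Hs _]]]; inversion Hs.
    + intro F; exact (excl x t Ho F V).
Qed.
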